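(* Let $f\in\mathbb{C}[h]$. (1) If $f\notin\mathbb{C}$ (i.e. $f$ is not a constant polynomial), then $\deg(\alpha\beta)=\deg(\alpha)+\deg(\beta)$ (addition in $\mathbb{Z}_+^2$) for all nonzero $\alpha,\beta\in\mathcal{H}(f)$. (2) The algebra $\mathcal{H}(f)$ has no zero-divisors if and only if $f\notin\mathbb{C}$.
   Context: For $f(h)\in\mathbb{C}[h]$, $\mathcal{H}(f)$ is the unital associative $\mathbb{C}$-algebra generated by $x,y,h$ with relations $hx=xf(h)$, $yh=f(h)y$, $yx-xy=f(h)-h$. The elements $x^ih^jy^k$ ($i,j,k\ge 0$) form a basis of $\mathcal{H}(f)$, so every nonzero $\alpha\in\mathcal{H}(f)$ can be uniquely written as $\alpha=x^ng(h)y^m+\sum_{(i,j)<(n,m)}x^ig_{ij}(h)y^j$ with $0\neq g\in\mathbb{C}[h]$, $g_{ij}\in\mathbb{C}[h]$, where $<$ is the lexicographic order on $\mathbb{Z}_+^2$ ($(i,j)>(i',j')$ iff $i>i'$, or $i=i'$ and $j>j'$). Then $\deg\alpha:=(n,m)$. *)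

(* Defs.v *)
From HB Require Import structures.
From mathcomp Require Import all_boot all_order all_algebra.
Set Implicit Arguments. Unset Strict Implicit. Unset Printing Implicit Defensive.
Import Order.TTheory GRing.Theory Num.Theory.
Local Open Scope ring_scope.

Definition peval (C : numClosedFieldType) (A : algType C) (h : A) (p : {poly C}) : A :=
  horner_alg h p.

Definition Hrel (C : numClosedFieldType) (A : algType C) (f : {poly C}) (x y h : A) : Prop :=
  [/\ h * x = x * peval h f,
      y * h = peval h f * y &
      y * x - x * y = peval h f - h].

Definition mon (C : numClosedFieldType) (A : algType C) (x y h : A) (t : nat * nat * nat) : A :=
  x ^+ t.1.1 * h ^+ t.1.2 * y ^+ t.2.

Definition PBW_basis (C : numClosedFieldType) (A : algType C) (x y h : A) : Prop :=
  (forall a : A, exists (s : seq (nat * nat * nat)) (c : nat * nat * nat -> C),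
      a = \sum_(t <- s) c t *: mon x y h t)
  /\ (forall (s : seq (nat * nat * nat)) (c : nat * nat * nat -> C),
      uniq s -> \sum_(t <- s) c t *: mon x y h t = 0 -> forall t, t \in s -> c t = 0).

Definition lexlt (a b : nat * nat) : bool :=
  (a.1 < b.1)%N || ((a.1 == b.1) && (a.2 < b.2)%N).

Definition is_deg (C : numClosedFieldType) (A : algType C) (x y h : A)
    (alpha : A) (d : nat * nat) : Prop :=
  exists (s : seq (nat * nat)) (g : nat * nat -> {poly C}),
    [/\ uniq s, d \in s, g d != 0,
        (forall t, t \in s -> t != d -> lexlt t d) &
        alpha = \sum_(t <- s) x ^+ t.1 * peval h (g t) * y ^+ t.2].

Definition is_const (C : numClosedFieldType) (f : {poly C}) : Prop :=
  exists c : C, f = c%:P.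

(* Main.v *)
Require Import Defs.
From HB Require Import structures.
From mathcomp Require Import all_boot all_order all_algebra.
From mathcomp Require Import zify.
Import Order.TTheory GRing.Theory Num.Theory.
Local Open Scope ring_scope.

Section S.
Variables (C : numClosedFieldType) (A : algType C) (f : {poly C}) (x y h : A).
Hypothesis Hhx : h * x = x * peval h f.
Hypothesis Hyh : y * h = peval h f * y.
Hypothesis Hyx : y * x - x * y = peval h f - h.

Local Notation ev := (peval h).

Lemma evD p q : ev (p + q) = ev p + ev q. Proof. by rewrite /peval rmorphD. Qed.
Lemma evB p q : ev (p - q) = ev p - ev q. Proof. by rewrite /peval rmorphB. Qed.
Lemma evM p q : ev (p * q) = ev p * ev q. Proof. by rewrite /peval rmorphM. Qed.
Lemma evC c : ev c%:P = c%:A. Proof. by rewrite /peval horner_algC. Qed.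
Lemma evX : ev 'X = h. Proof. by rewrite /peval horner_algX. Qed.
Lemma ev0 : ev 0 = 0. Proof. by rewrite /peval rmorph0. Qed.
Lemma ev1 : ev 1 = 1. Proof. by rewrite /peval rmorph1. Qed.
Lemma evZ c p : ev (c *: p) = c *: ev p.
Proof. by rewrite /peval -mul_polyC rmorphM /= (horner_algC h c) mulr_algl. Qed.
Lemma evXn n : ev 'X^n = h ^+ n. Proof. by rewrite /peval rmorphXn /= (horner_algX h). Qed.

Definition sig p := p \Po f.

Lemma evx p : ev p * x = x * ev (sig p).
Proof.
elim/poly_ind: p => [|p c IH]; first by rewrite /sig comp_poly0 !ev0 mul0r mulr0.
rewrite /sig comp_poly_MXaddC !evD !evM !evC evX -/(sig p).
by rewrite mulrDl -mulrA Hhx mulrA IH mulrDr !mulrA mulr_algl mulr_algr.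
Qed.

Lemma yev p : y * ev p = ev (sig p) * y.
Proof.
elim/poly_ind: p => [|p c IH]; first by rewrite /sig comp_poly0 !ev0 mul0r mulr0.
rewrite /sig comp_poly_MXaddC !evD !evM !evC evX -/(sig p).
by rewrite mulrDr mulrA IH -mulrA Hyh mulrDl !mulrA mulr_algl mulr_algr.
Qed.

Lemma evxn p k : ev p * x ^+ k = x ^+ k * ev (iter k sig p).
Proof.
elim: k p => [|k IH] p; first by rewrite !expr0 mulr1 mul1r.
by rewrite exprS mulrA evx -mulrA IH mulrA iterSr.
Qed.

Lemma ynev p k : y ^+ k * ev p = ev (iter k sig p) * y ^+ k.
Proof.
elim: k p => [|k IH] p; first by rewrite !expr0 mulr1 mul1r.
by rewrite exprSr -mulrA yev mulrA IH -mulrA iterSr.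
Qed.

Definition M (t : nat * {poly C} * nat) : A := x ^+ t.1.1 * ev t.1.2 * y ^+ t.2.
Definition Sp (P : nat -> nat -> bool) (a : A) :=
  exists s : seq (nat * {poly C} * nat), all (fun t => P t.1.1 t.2) s /\ a = \sum_(t <- s) M t.

Lemma Sp0 (P : nat -> nat -> bool) : Sp P 0. Proof. by exists [::]; rewrite big_nil. Qed.
Lemma SpD (P : nat -> nat -> bool) a b : Sp P a -> Sp P b -> Sp P (a + b).
Proof.
move=> [s1 [H1 ->]] [s2 [H2 ->]]; exists (s1 ++ s2).
by rewrite all_cat H1 H2 big_cat.
Qed.
Lemma SpM (P : nat -> nat -> bool) (t : nat * {poly C} * nat) : P t.1.1 t.2 -> Sp P (M t).
Proof. by move=> Ht; exists [:: t]; rewrite /= andbT big_seq1. Qed.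
Lemma Sp_ind (P : nat -> nat -> bool) (Q : A -> Prop) : Q 0 -> (forall a b, Q a -> Q b -> Q (a+b)) ->
  (forall t, P t.1.1 t.2 -> Q (M t)) -> forall a, Sp P a -> Q a.
Proof.
move=> Q0 QD QM a [s [Hs ->]]; elim: s Hs => [|t s IH] /=; first by rewrite big_nil.
by move/andP=> [Ht Hs]; rewrite big_cons; apply: QD; [exact: QM | exact: IH].
Qed.
Lemma Sp_mono (P1 P2 : nat -> nat -> bool) a : (forall i j, P1 i j -> P2 i j) -> Sp P1 a -> Sp P2 a.
Proof.
move=> H; move: a; apply: (@Sp_ind P1 (Sp P2)); [exact: Sp0|exact: SpD|].
by move=> t Ht; apply: SpM; apply: H.
Qed.

Definition G k := Sp (fun i _ => i < k)%N.

Lemma G_leftx k i r : G k r -> G (i + k) (x ^+ i * r).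
Proof.
move: r; apply: (@Sp_ind _ (fun r => G (i + k) (x ^+ i * r))).
- by rewrite mulr0; apply: Sp0.
- by move=> a b Ha Hb; rewrite mulrDr; apply: SpD.
move=> [[a p] b] /= Ha.
have -> : x ^+ i * M (a, p, b) = M ((i + a)%N, p, b) by rewrite /M /= !mulrA exprD.
by apply: SpM => /=; rewrite ltn_add2l.
Qed.

Lemma G_lefte k p r : G k r -> G k (ev p * r).
Proof.
move: r; apply: (@Sp_ind _ (fun r => G k (ev p * r))).
- by rewrite mulr0; apply: Sp0.
- by move=> a b Ha Hb; rewrite mulrDr; apply: SpD.
move=> [[a q] b] /= Ha.
have -> : ev p * M (a, q, b) = M (a, iter a sig p * q, b).
  by rewrite /M /= !mulrA evxn evM !mulrA.
by apply: SpM.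
Qed.

Lemma G_right k p j r : G k r -> G k (r * (ev p * y ^+ j)).
Proof.
move: r; apply: (@Sp_ind _ (fun r => G k (r * (ev p * y ^+ j)))).
- by rewrite mul0r; apply: Sp0.
- by move=> a b Ha Hb; rewrite mulrDl; apply: SpD.
move=> [[a q] b] /= Ha.
have -> : M (a, q, b) * (ev p * y ^+ j) = M (a, q * iter b sig p, (b + j)%N).
  by rewrite /M /= !mulrA -(mulrA _ (y ^+ b)) ynev evM exprD !mulrA.
by apply: SpM.
Qed.

Lemma G_mono k k' r : (k <= k')%N -> G k r -> G k' r.
Proof. by move=> le; apply: Sp_mono => i _ lt; apply: leq_trans le. Qed.

Lemma yxn a : exists r, G a r /\ y * x ^+ a = x ^+ a * y + r.
Proof.
elim: a => [|a [r [Hr E]]].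
  by exists 0; split; [exact: Sp0 | rewrite !expr0 mulr1 mul1r addr0].
exists (x * r + M (a, iter a sig (f - 'X), 0%N)); split.
  apply: SpD; first by have := G_leftx _ 1 _ Hr; rewrite expr1.
  by apply: SpM => /=.
have Eyx : y * x = x * y + (ev f - h) by rewrite -Hyx addrC subrK.
rewrite exprS mulrA Eyx mulrDl -mulrA E mulrDr addrA mulrA -exprS.
congr (_ + _); rewrite /M /= expr0 mulr1 -evxn.
by rewrite evB evX.
Qed.

Lemma yG k r : G k r -> G k (y * r).
Proof.
move: r; apply: (@Sp_ind _ (fun r => G k (y * r))).
- by rewrite mulr0; apply: Sp0.
- by move=> a b Ha Hb; rewrite mulrDr; apply: SpD.
move=> [[a q] b] /= Ha.
have [r [Hr E]] := yxn a.
rewrite /M /= !mulrA E mulrDl mulrDl; apply: SpD.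
  have -> : x ^+ a * y * ev q * y ^+ b = M (a, sig q, b.+1).
    by rewrite /M /= -(mulrA _ y) yev !mulrA -(mulrA _ y) -exprS.
  by apply: SpM.
rewrite -mulrA; apply: G_right; exact: G_mono _ _ _ (ltnW Ha) Hr.
Qed.

Lemma ynxn j k : exists r, G k r /\ y ^+ j * x ^+ k = x ^+ k * y ^+ j + r.
Proof.
elim: j => [|j [r [Hr E]]].
  by exists 0; split; [exact: Sp0 | rewrite !expr0 mulr1 mul1r addr0].
have [r0 [Hr0 E0]] := yxn k.
exists (r0 * y ^+ j + y * r); split.
  apply: SpD; last exact: yG.
  by have := G_right _ 1 j _ Hr0; rewrite ev1 mul1r.
rewrite exprS -mulrA E mulrDr mulrA E0 mulrDl addrA -mulrA -exprS.
by congr (_ + _); rewrite (mulrA y) //.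
Qed.

Lemma Mmul i p j k q l : exists r, G (i + k) r /\
  M (i, p, j) * M (k, q, l) = M ((i + k)%N, iter k sig p * iter j sig q, (j + l)%N) + r.
Proof.
have [r [Hr E]] := ynxn j k.
exists (x ^+ i * (ev p * (r * (ev q * y ^+ l)))); split.
  by apply: G_leftx; apply: G_lefte; apply: G_right.
rewrite /M /=.
have -> : x ^+ i * ev p * y ^+ j * (x ^+ k * ev q * y ^+ l) =
   x ^+ i * (ev p * ((y ^+ j * x ^+ k) * (ev q * y ^+ l))) by rewrite !mulrA.
rewrite E mulrDl mulrDr mulrDr; congr (_ + _).
rewrite -(mulrA (x ^+ k)) (mulrA (ev p)) evxn (mulrA (y ^+ j)) ynev evM !exprD !mulrA.
done.
Qed.


Lemma lex_add (i j n m k l p q : nat) :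
  (lexlt (i,j) (n,m) || ((i,j) == (n,m))) -> (lexlt (k,l) (p,q) || ((k,l) == (p,q))) ->
  (lexlt (i,j) (n,m) || lexlt (k,l) (p,q)) -> lexlt (i+k, j+l)%N (n+p, m+q)%N.
Proof. rewrite /lexlt /= !xpair_eqE. lia. Qed.
Lemma lex_trans a b c : lexlt a b -> lexlt b c -> lexlt a c.
Proof. case: a b c => [a1 a2] [b1 b2] [c1 c2]; rewrite /lexlt /=; lia. Qed.
Lemma lex_total a b : [|| lexlt a b, a == b | lexlt b a].
Proof. case: a b => [a1 a2] [b1 b2]; rewrite /lexlt /= xpair_eqE; lia. Qed.
Lemma lex_irr a : lexlt a a = false.
Proof. case: a => [a1 a2]; rewrite /lexlt /=; lia. Qed.
Lemma lex_fst a b : lexlt a b -> (a.1 <= b.1)%N.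
Proof. case: a b => [a1 a2] [b1 b2]; rewrite /lexlt /=; lia. Qed.
Lemma lexlt_pair (u d : nat * nat) : lexlt (u.1, u.2) d = lexlt u d.
Proof. by case: u. Qed.

Definition N (u : nat * nat) (p : {poly C}) : A := x ^+ u.1 * ev p * y ^+ u.2.

Lemma ND u p q : N u (p + q) = N u p + N u q.
Proof. by rewrite /N evD mulrDr mulrDl. Qed.

Lemma canon (P : nat -> nat -> bool) a : Sp P a ->
  exists (s : seq (nat * nat)) (g : nat * nat -> {poly C}),
    [/\ uniq s, all (fun u => P u.1 u.2) s & a = \sum_(u <- s) N u (g u)].
Proof.
move=> [s [Hs ->]]; elim: s Hs => [|t s IH] /=.
  by move=> _; exists [::], (fun _ => 0); split; rewrite ?big_nil.
rewrite big_cons; move/andP=> [Ht /IH [s' [g' [Hu Ha ->]]]].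
set u0 := (t.1.1, t.2).
have Mt : M t = N u0 t.1.2 by [].
case: (boolP (u0 \in s')) => Hin.
  exists s', (fun u => if u == u0 then g' u + t.1.2 else g' u); split => //.
  rewrite (bigD1_seq u0 Hin Hu) /=.
  rewrite [in RHS](bigD1_seq u0 Hin Hu) /= eqxx ND.
  rewrite [in RHS](eq_bigr (fun u => N u (g' u))) => [|u /negbTE -> //].
  by rewrite Mt addrA (addrC (N u0 t.1.2)).
exists (u0 :: s'), (fun u => if u == u0 then t.1.2 else g' u); split.
- by rewrite /= Hin Hu.
- by rewrite /= Ht Ha.
rewrite big_cons eqxx Mt; congr (_ + _); apply: eq_big_seq => u uin.
have /negbTE -> // : u != u0 by apply/eqP => E; rewrite -E uin in Hin.
Qed.

Lemma Sp_sumN (P : nat -> nat -> bool) (s : seq (nat * nat)) (Q : pred (nat * nat)) g :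
  (forall u, u \in s -> Q u -> P u.1 u.2) -> Sp P (\sum_(u <- s | Q u) N u (g u)).
Proof.
elim: s => [|u s IH] H; first by rewrite big_nil; exact: Sp0.
rewrite big_cons; case: ifP => Qu.
  apply: SpD; last by apply: IH => v vin; apply: H; rewrite in_cons vin orbT.
  by apply: (SpM _ (u.1, g u, u.2)); apply: H => //; rewrite mem_head.
by apply: IH => v vin; apply: H; rewrite in_cons vin orbT.
Qed.

Definition F d := Sp (fun i j => lexlt (i, j) d).

Lemma deg_split a d : is_deg x y h a d -> exists g r, [/\ g != 0, F d r & a = N d g + r].
Proof.
move=> [s [g [Hu Hd Hg Hlt ->]]]; exists (g d), (\sum_(t <- s | t != d) N t (g t)); split => //.
  by apply: Sp_sumN => u uin ne; rewrite lexlt_pair; exact: Hlt.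
by rewrite (bigD1_seq d Hd Hu).
Qed.

Lemma deg_build d g r : g != 0 -> F d r -> is_deg x y h (N d g + r) d.
Proof.
move=> Hg /canon [s [g' [Hu Ha ->]]].
have dnin : d \notin s.
  by apply/negP => din; have := allP Ha d din; rewrite /= lexlt_pair lex_irr.
exists (d :: s), (fun u => if u == d then g else g' u); split.
- by rewrite /= Hu andbT.
- by rewrite mem_head.
- by rewrite eqxx.
- move=> t; rewrite in_cons => /orP [/eqP -> | tin]; first by rewrite eqxx.
  by move=> _; have := allP Ha t tin; rewrite /= lexlt_pair.
rewrite big_cons eqxx; congr (_ + _); apply: eq_big_seq => u uin.
have /negbTE -> // : u != d by apply/eqP => E; rewrite -E uin in dnin.
Qed.

Lemma G_F n d r : G n r -> (n <= d.1)%N -> F d r.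
Proof.
move=> Hr le; apply: Sp_mono Hr => i j lt.
by case: d le => d1 d2 /= le; rewrite /lexlt /= (leq_trans lt le).
Qed.

Lemma prodF (P1 P2 : nat -> nat -> bool) d a b :
  (forall i j k l, P1 i j -> P2 k l -> lexlt (i + k, j + l)%N d) ->
  Sp P1 a -> Sp P2 b -> F d (a * b).
Proof.
move=> H Ha Hb; move: a Ha; apply: (@Sp_ind P1 (fun a => F d (a * b))).
- by rewrite mul0r; apply: Sp0.
- by move=> a a' Ha Ha'; rewrite mulrDl; apply: SpD.
move=> [[i p] j] /= Ht; move: b Hb; apply: (@Sp_ind P2 (fun b => F d (M (i, p, j) * b))).
- by rewrite mulr0; apply: Sp0.
- by move=> a a' Ha Ha'; rewrite mulrDr; apply: SpD.
move=> [[k q] l] /= Ht'.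
have [r [Hr ->]] := Mmul i p j k q l.
have Hl := H _ _ _ _ Ht Ht'.
apply: SpD; first by apply: SpM.
by apply: G_F Hr _; apply: lex_fst Hl.
Qed.

Hypothesis Hf : (1 < size f)%N.

Lemma iter_sig_neq0 n p : p != 0 -> iter n sig p != 0.
Proof. by move=> Hp; elim: n => //= n IH; rewrite /sig comp_poly_eq0. Qed.

Lemma deg_mul a b d1 d2 : is_deg x y h a d1 -> is_deg x y h b d2 ->
  is_deg x y h (a * b) (d1.1 + d2.1, d1.2 + d2.2)%N.
Proof.
case: d1 => n m; case: d2 => p q /=.
move=> /deg_split [g [r [Hg Hr ->]]] /deg_split [k [r' [Hk Hr' ->]]].
have [r0 [H0 E0]] := Mmul n g m p k q.
have NM : forall u p, N u p = M (u.1, p, u.2) by [].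
rewrite mulrDl !mulrDr !NM /= E0 -!addrA.
have -> : M ((n + p)%N, iter p sig g * iter m sig k, (m + q)%N) =
          N ((n + p)%N, (m + q)%N) (iter p sig g * iter m sig k) by [].
apply: deg_build; first by rewrite mulf_neq0 // iter_sig_neq0.
apply: SpD; first exact: G_F H0 _.
apply: SpD.
  apply: (@prodF (fun i j => (i == n) && (j == m)) (fun i j => lexlt (i, j) (p, q))) => //.
    move=> i j k' l /andP [/eqP -> /eqP ->] lt.
    by apply: lex_add; rewrite ?eqxx ?lt ?orbT.
  by apply: (SpM (fun i j => (i == _) && (j == _)) (_, _, _)); rewrite /= !eqxx.
apply: SpD.
  apply: (@prodF (fun i j => lexlt (i, j) (n, m)) (fun i j => (i == p) && (j == q))) => //.
    move=> i j k' l lt /andP [/eqP -> /eqP ->].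
    by apply: lex_add => //; rewrite ?eqxx ?orbT ?lt.
  by apply: (SpM (fun i j => (i == _) && (j == _)) (_, _, _)); rewrite /= !eqxx.
apply: (@prodF (fun i j => lexlt (i, j) (n, m)) (fun i j => lexlt (i, j) (p, q))) => //.
move=> i j k' l lt lt'.
by apply: lex_add => //; rewrite ?eqxx ?orbT ?lt ?lt'.
Qed.


Hypothesis Hspan : forall a : A, exists (s : seq (nat * nat * nat)) (c : nat * nat * nat -> C),
      a = \sum_(t <- s) c t *: mon x y h t.
Hypothesis Hind : forall (s : seq (nat * nat * nat)) (c : nat * nat * nat -> C),
      uniq s -> \sum_(t <- s) c t *: mon x y h t = 0 -> forall t, t \in s -> c t = 0.

Lemma ev_sum (p : {poly C}) n : (size p <= n)%N -> ev p = \sum_(0 <= k < n) p`_k *: h ^+ k.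
Proof.
move=> le.
have Ep : p = \poly_(k < n) p`_k.
  apply/polyP => k; rewrite coef_poly; case: ltnP => // le2.
  by rewrite nth_default // (leq_trans le le2).
rewrite {1}Ep poly_def /peval rmorph_sum /= big_mkord; apply: eq_bigr => k _.
have := evZ (p`_k) 'X^k; by rewrite evXn /peval => ->.
Qed.

Lemma deg_nz a d : is_deg x y h a d -> a != 0.
Proof.
move=> [s [g [Hu Hd Hg Hlt Ha]]]; apply/eqP => a0.
set n := \max_(u <- s) size (g u).
set T := [seq ((u.1, k), u.2) | u <- s, k <- index_iota 0 n].
set c3 := fun t : nat * nat * nat => (g (t.1.1, t.2))`_t.1.2.
have E : \sum_(t <- T) c3 t *: mon x y h t = 0.
  rewrite big_allpairs_dep /= -[RHS]a0 Ha; apply: eq_big_seq => u uin.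
  rewrite (ev_sum (g u) n); last by apply: (leq_bigmax_seq (F := fun u => size (g u))).
  rewrite mulr_sumr mulr_suml; apply: eq_bigr => k _.
  by rewrite /mon /c3 /= -scalerAr -scalerAl; case: u {uin}.
have uT : uniq T.
  apply: allpairs_uniq => //; first by rewrite /index_iota iota_uniq.
  by move=> [[a1 a2] k1] [[b1 b2] k2] _ _ /= [-> -> ->].
have Hc := Hind T c3 uT E.
move/negP: Hg; apply; apply/eqP/polyP => k; rewrite coef0.
case: (ltnP k n) => kn.
  have Hm : ((d.1, k), d.2) \in T.
    rewrite /T; apply: (allpairs_f (fun (u : nat * nat) (k : nat) => ((u.1, k), u.2))) => //.
    by rewrite mem_index_iota.
  have := Hc _ Hm; rewrite /c3 /=.
  by case: d {Hd Hlt Hm}.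
rewrite nth_default //; apply: leq_trans kn.
exact: (leq_bigmax_seq (F := fun u => size (g u))).
Qed.

Lemma all_Sp a : Sp (fun _ _ => true) a.
Proof.
have [s [c ->]] := Hspan a.
elim: s => [|t s IH]; first by rewrite big_nil; apply: Sp0.
rewrite big_cons; apply: SpD => //.
have -> : c t *: mon x y h t = M (t.1.1, c t *: 'X^(t.1.2), t.2).
  by rewrite /M /mon evZ evXn -scalerAr -scalerAl.
by apply: SpM.
Qed.

Lemma lexmax (u : nat * nat) s : exists d, d \in u :: s /\
   forall t, t \in u :: s -> t != d -> lexlt t d.
Proof.
elim: s u => [|v s IH] u.
  by exists u; split; [rewrite mem_head | move=> t; rewrite inE => ->].
have [d' [d'in Hd']] := IH v.
case: (boolP (lexlt d' u)) => H.
  exists u; split; first by rewrite mem_head.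
  move=> t; rewrite in_cons => /orP [/eqP -> | tin]; first by rewrite eqxx.
  move=> _; case: (eqVneq t d') => [-> // | ne].
  exact: lex_trans (Hd' t tin ne) H.
exists d'; split; first by rewrite in_cons d'in orbT.
move=> t; rewrite in_cons => /orP [/eqP -> | tin]; last exact: Hd'.
move=> ne; have := lex_total u d'; rewrite (negbTE ne) (negbTE H).
by case: (lexlt u d').
Qed.

Lemma deg_exists a : a != 0 -> exists d, is_deg x y h a d.
Proof.
move=> an.
have [s [g [Hu _ Ha]]] := canon _ _ (all_Sp a).
set s2 := [seq u <- s | g u != 0].
have Ha2 : a = \sum_(u <- s2) N u (g u).
  rewrite big_filter Ha [RHS]big_mkcond /=; apply: eq_bigr => u _.
  by case: eqP => // ->; rewrite /N ev0 mulr0 mul0r.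
case E: s2 Ha2 => [|u s2'] Ha2.
  by move: an; rewrite Ha2 big_nil eqxx.
have [d [din dmax]] := lexmax u s2'.
exists d, s2, g; split.
- exact: filter_uniq.
- by rewrite E.
- by move: din; rewrite -E mem_filter => /andP [].
- by rewrite E.
by rewrite E.
Qed.

End S.

Theorem lemma2 (C : numClosedFieldType) (f : {poly C}) (A : algType C) (x y h : A) :
  Hrel f x y h -> PBW_basis x y h ->
  (~ is_const f ->
     forall (a b : A) (d1 d2 : nat * nat), a != 0 -> b != 0 ->
       is_deg x y h a d1 -> is_deg x y h b d2 ->
       is_deg x y h (a * b) (d1.1 + d2.1, d1.2 + d2.2)%N)
  /\ ((forall a b : A, a * b = 0 -> a = 0 \/ b = 0) <-> ~ is_const f).
Proof.
move=> [Hhx Hyh Hyx] [Hspan Hind].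
have Hnc : ~ is_const f -> (1 < size f)%N.
  move=> nc; rewrite ltnNge; apply/negP => /size1_polyC E; apply: nc; by exists f`_0.
have P1 : ~ is_const f -> forall (a b : A) (d1 d2 : nat * nat), a != 0 -> b != 0 ->
       is_deg x y h a d1 -> is_deg x y h b d2 ->
       is_deg x y h (a * b) (d1.1 + d2.1, d1.2 + d2.2)%N.
  move=> nc a b d1 d2 _ _; exact: (@deg_mul C A f x y h Hhx Hyh Hyx (Hnc nc)).
split; first exact: P1.
split.
  move=> nzd [c Ec].
  have Z : (h - c%:A) * x = 0.
    by rewrite mulrBl Hhx Ec evC mulr_algr mulr_algl subrr.
  case: (nzd _ _ Z) => E.
    have := Hind [:: (0, 1, 0); (0, 0, 0)]%N (fun t => if t == (0, 1, 0)%N then 1 else - c) isT.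
    rewrite big_cons big_seq1 /mon /= !expr0 expr1 !mul1r !mulr1 scale1r scaleNr -E.
    move=> /(_ erefl (0, 1, 0)%N); rewrite mem_head eqxx => /(_ isT) /eqP.
    by rewrite oner_eq0.
  have := Hind [:: (1, 0, 0)]%N (fun _ => 1) isT.
  rewrite big_seq1 /mon /= !expr0 expr1 !mulr1 scale1r E.
  move=> /(_ erefl (1, 0, 0)%N); rewrite mem_head => /(_ isT) /eqP.
  by rewrite oner_eq0.
move=> nc a b ab0.
case: (eqVneq a 0) => [->|an]; first by left.
case: (eqVneq b 0) => [->|bn]; first by right.
exfalso.
have [d1 H1] := @deg_exists C A x y h Hspan a an.
have [d2 H2] := @deg_exists C A x y h Hspan b bn.
have := @deg_nz C A x y h Hind _ _ (P1 nc a b d1 d2 an bn H1 H2).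
by rewrite ab0 eqxx.
Qed.
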